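(* The module $\mathbb W_1^{\otimes m}$ is generated by its degree-zero part $V^{\otimes m}$ as a $U(\mathfrak p)$-module.
   Context: Fix integers $\ell>1$, $n\ge m\ge1$; $\lceil i/n\rceil$ is the block index of $1\le i\le n\ell$. $E_{ij}$ are matrix units of $\mathfrak{gl}(n\ell)$; $\mathfrak p\subset\mathfrak{gl}(n\ell)\otimes\mathbb C[z]$ is the Lie subalgebra spanned by the $E_{ij}\otimes z^k$ ($k\ge0$) with $\lceil i/n\rceil-\lceil j/n\rceil+k\equiv0\pmod\ell$. Let $V=\mathbb C^{n\ell}$ and $\mathbb W_1=V\otimes\mathbb C[z]$ (graded by $z$-degree) with the natural action of $\mathfrak{gl}(n\ell)\otimes\mathbb C[z]$ ($(\xi\otimes z^k)(v\otimes z^r)=\xi v\otimes z^{k+r}$); $\mathfrak p$ acts on $\mathbb W_1^{\otimes m}$ diagonally by restriction. *)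

(* Defs.v *)
From HB Require Import structures.
From mathcomp Require Import all_boot all_order all_algebra.
Set Implicit Arguments. Unset Strict Implicit. Unset Printing Implicit Defensive.
Import GRing.Theory.
Local Open Scope ring_scope.

(* Basis of W_1^{(x) m} = (V (x) C[z])^{(x) m}, V = F^N (N = n*l):
   basis tensors (e_{i_1} z^{r_1}) (x) ... (x) (e_{i_m} z^{r_m}) are indexed
   by m-tuples of pairs (i, r), i : 'I_N (0-based), r : nat.
   A vector is a (finitely supported) coefficient function idx N m -> F. *)
Definition idx (N m : nat) : Type := (m.-tuple ('I_N * nat))%type.

Definition tset (T : Type) (m : nat) (t : m.-tuple T) (p : 'I_m) (x : T)
  : m.-tuple T := [tuple if q == p then x else tnth t q | q < m].

(* E_{ij} (x) z^k belongs to p iff  ceil(i/n) - ceil(j/n) + k = 0 mod l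
   (1-based indices).  For 0-based i', j' one has ceil((i'+1)/n) = i'/n + 1,
   so the condition reads  i'/n + k = j'/n  (mod l). *)
Definition in_p (n l N : nat) (i j : 'I_N) (k : nat) : bool :=
  (i %/ n + k == j %/ n %[mod l])%N.

(* diagonal action of E_{ij} (x) z^k on W_1^{(x) m}, on coefficient functions:
   (E_{ij} z^k)(e_{j} z^r) = e_i z^{r+k}, and E_{ij} e_{j'} = 0 for j' <> j. *)
Definition act (F : fieldType) (N m : nat) (i j : 'I_N) (k : nat)
  (f : idx N m -> F) : idx N m -> F :=
  fun t => \sum_(p < m)
    (if ((tnth t p).1 == i) && (k <= (tnth t p).2)%N
     then f (tset t p (j, ((tnth t p).2 - k)%N)) else 0).

Definition degree0 (F : fieldType) (N m : nat) (f : idx N m -> F) : Prop :=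
  forall t : idx N m, (exists p : 'I_m, (tnth t p).2 != 0%N) -> f t = 0.

Definition fin_supp (F : fieldType) (N m : nat) (f : idx N m -> F) : Prop :=
  exists s : seq (idx N m), forall t, t \notin s -> f t = 0.

(* the U(p)-submodule generated by V^{(x) m}: the smallest subspace containing
   V^{(x) m} and stable under the (spanning) elements E_{ij} (x) z^k of p *)
Inductive gen_deg0 (F : fieldType) (n l m : nat) : (idx (n * l) m -> F) -> Prop :=
  | gen_base (f : idx (n * l) m -> F) : degree0 f -> gen_deg0 f
  | gen_add (f g : idx (n * l) m -> F) : gen_deg0 f -> gen_deg0 g ->
      gen_deg0 (fun t => f t + g t)
  | gen_scale (c : F) (f : idx (n * l) m -> F) : gen_deg0 f ->
      gen_deg0 (fun t => c * f t)
  | gen_act (i j : 'I_(n * l)) (k : nat) (f : idx (n * l) m -> F) :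
      in_p n l i j k -> gen_deg0 f -> gen_deg0 (act i j k f).
Arguments gen_deg0 {F} n l m _.

(* Main.v *)
Require Import Defs.
From HB Require Import structures.
From mathcomp Require Import all_boot all_order all_algebra.
From Stdlib Require Import FunctionalExtensionality.
From mathcomp Require Import zify ring.
Import GRing.Theory.

Definition delta (F : fieldType) (N m : nat) (s : idx N m) : idx N m -> F :=
  fun u => if u == s then 1%R else 0%R.

Arguments delta F {N m} s.
Arguments tset {T m} t p x.

Lemma tnth_tset (T : Type) (m : nat) (t : m.-tuple T) p x q :
  tnth (tset t p x) q = if q == p then x else tnth t q.
Proof. by rewrite /tset tnth_mktuple. Qed.

Lemma act_delta (F : fieldType) (N m : nat) (i j : 'I_N) (k : nat)
  (s : idx N m) (p : 'I_m) :
  tnth s p = (j, 0%N) -> (forall q, q != p -> (tnth s q).1 != j) ->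
  act i j k (delta F s) = delta F (tset s p (i, k)).
Proof.
move=> sp sq; apply: functional_extensionality => u.
rewrite /act (bigD1 p) //= big1 ?addr0; last first.
  move=> q qp; case: ifP => // _; rewrite /delta.
  case: eqP => // E; move: (sq q qp); rewrite -E tnth_tset eqxx /=.
  by rewrite eqxx.
rewrite /delta.
case: (boolP (u == tset s p (i, k))) => [/eqP -> | neq].
  rewrite !tnth_tset eqxx /= eqxx leqnn /= subnn.
  have -> : tset (tset s p (i, k)) p (j, 0%N) = s.
    apply: eq_from_tnth => q; rewrite !tnth_tset; case: eqP => [->|//].
    by rewrite sp.
  by rewrite eqxx.
case: ifP => // /andP [/eqP ui ku]; case: eqP => // E.
exfalso; move/eqP: neq; apply; apply: eq_from_tnth => q.
rewrite tnth_tset; case: eqP => [->|qp].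
  have := congr1 (fun t => tnth t p) E; rewrite tnth_tset eqxx sp.
  case=> h; apply/eqP; rewrite -ui; case: (tnth u p) h ku => a b /= h ku.
  by rewrite xpair_eqE eqxx /= eqn_leq ku -subn_eq0 h.
have := congr1 (fun t => tnth t q) E; rewrite tnth_tset.
by move/eqP: qp => /negbTE ->.
Qed.

Definition degs (N m : nat) (t : idx N m) : nat := \sum_(p < m) (tnth t p).2.
Arguments degs {N m} t.

Lemma free_index (n l m : nat) (t : idx (n * l) m) (p : 'I_m) (b : nat) :
  (m <= n)%N -> (b < l)%N ->
  exists j : 'I_(n * l), (j %/ n == b)%N && [forall q, (q != p) ==> ((tnth t q).1 != j)].
Proof.
move=> mn bl.
have n0 : (0 < n)%N := leq_trans (leq_ltn_trans (leq0n p) (ltn_ord p)) mn.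
pose S := [seq val (tnth t q).1 | q <- enum 'I_m & q != p].
have sS : (size S < n)%N.
  rewrite size_map size_filter; apply: leq_trans _ mn.
  have E := count_predC (fun q => q != p) (enum 'I_m).
  rewrite size_enum_ord in E.
  have C : count (predC (fun q => q != p)) (enum 'I_m) = 1%N.
    have <- : count_mem p (enum 'I_m) = 1%N.
      by rewrite (count_uniq_mem p (enum_uniq 'I_m)) mem_enum.
    by apply: eq_count => q /=; rewrite negbK eq_sym.
  by rewrite -[X in (_ < X)%N]E C addn1.
have [x xi xS] : exists2 x, x \in iota (b * n) n & x \notin S.
  apply/hasP; apply/negPn/negP => /hasPn H.
  have := uniq_leq_size (iota_uniq (b * n) n) (fun x xi => negbNE (H x xi)).
  by rewrite size_iota leqNgt sS.
move: xi; rewrite mem_iota => /andP [x1 x2].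
have xl : (x < n * l)%N.
  have H : (b.+1 * n <= l * n)%N := leq_mul bl (leqnn n).
  rewrite mulSn in H; nia.
exists (Ordinal xl); apply/andP; split.
  rewrite /= -(subnKC x1) divnMDl // divn_small ?addn0 //.
  by rewrite ltn_subLR // addnC.
apply/forallP => q; apply/implyP => qp; apply/negP => /eqP E.
move/negP: xS; apply; apply/mapP; exists q; first by rewrite mem_filter qp mem_enum.
by rewrite E.
Qed.

Lemma degs_tset (N m : nat) (t : idx N m) (p : 'I_m) x :
  (degs (tset t p x) + (tnth t p).2 = degs t + x.2)%N.
Proof.
rewrite /degs (bigD1 p) //= [X in (_ = X + _)%N](bigD1 p) //= tnth_tset eqxx.
rewrite (eq_bigr (fun q => (tnth t q).2)); first by lia.
by move=> q /negbTE qp; rewrite tnth_tset qp.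
Qed.

Lemma delta_gen (F : fieldType) (l n m : nat) (hl : (1 < l)%N) (mn : (m <= n)%N)
  (t : idx (n * l) m) : gen_deg0 n l m (delta F t).
Proof.
have l0 : (0 < l)%N by lia.
move: {2}(degs t).+1 (ltnSn (degs t)) => d; elim: d t => // d IH t dt.
case: (pickP (fun p : 'I_m => (tnth t p).2 != 0%N)) => [p pp | all0]; last first.
  apply: gen_base => u [q qn]; rewrite /delta; case: eqP => // E.
  by move: (all0 q); rewrite -E qn.
set i := (tnth t p).1; set k := (tnth t p).2.
have [j /andP [/eqP jb /forallP jq]] :=
  @free_index n l m t p _ mn (ltn_pmod (i %/ n + k) l0).
set s := tset t p (j, 0%N).
have sp : tnth s p = (j, 0%N) by rewrite tnth_tset eqxx.
have sq : forall q, q != p -> (tnth s q).1 != j.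
  move=> q qp; rewrite tnth_tset (negbTE qp); exact: (implyP (jq q) qp).
have ts : tset s p (i, k) = t.
  apply: eq_from_tnth => q; rewrite !tnth_tset; case: eqP => [->|] //.
  by rewrite /i /k; case: (tnth t p).
rewrite -ts -(@act_delta F _ _ i j k s p sp sq); apply: gen_act.
  by rewrite /in_p jb modn_mod.
apply: IH; have := @degs_tset _ _ t p (j, 0%N); rewrite -/s /= addn0.
move: pp; rewrite -/k; lia.
Qed.

Theorem proposition2p3 (F : fieldType) (hF : [pchar F]%R =i pred0)
  (l n m : nat) (hl : (1 < l)%N) (hmn : (1 <= m <= n)%N)
  (f : idx (n * l) m -> F) :
  fin_supp f -> gen_deg0 n l m f.
Proof.
case/andP: hmn => _ mn; case=> s; elim: s f => [|u s IH] f fs.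
  by apply: gen_base => t _; apply: fs.
pose g := fun t => (f t + (- f u) * delta F u t)%R.
have gs : gen_deg0 n l m g.
  apply: IH => t ts; rewrite /g /delta; case: eqP => [->|tu].
    by rewrite mulr1 addrN.
  by rewrite mulr0 addr0 fs // in_cons negb_or ts andbT; apply/eqP.
have -> : f = (fun t => f u * delta F u t + g t)%R.
  apply: functional_extensionality => t; rewrite /g; ring.
apply: gen_add => //; apply: gen_scale; exact: delta_gen.
Qed.
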